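(* There are constants $C\in(0,\infty)$ and $c\in(0,1)$ such that for all $N,k\in\mathbb N$ and all $n\in\mathbb N$ with $n\le N$, $$\P(\tau^{(N)}_k=n)\le C\,k\,\P(T^{(N)}_1=n)\,\P(T^{(N)}_1\le n)^{k-1}\exp\Big(-\frac{ck}{\log n+1}\log^+\frac{ck}{\log n+1}\Big),$$ where $\log^+x:=\max(\log x,0)$.
   Context: Fix positive reals $r(n)$, $n\in\mathbb N$, with $r(n)=\frac an(1+o(1))$ as $n\to\infty$ for some $a\in(0,\infty)$; $R_N:=\sum_{n=1}^Nr(n)$. For each $N$, $(T^{(N)}_i)_{i\ge1}$ are i.i.d. with $\P(T^{(N)}_i=n)=\frac{r(n)}{R_N}\mathbf 1_{\{1,\dots,N\}}(n)$, and $\tau^{(N)}_k=\sum_{i=1}^kT^{(N)}_i$. *)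

(* Defs.v *)
From Stdlib Require Import Reals Lra Lia Arith.
Open Scope R_scope.

Fixpoint sum1 (f : nat -> R) (M : nat) : R :=
  match M with
  | O => 0
  | S M' => sum1 f M' + f (S M')
  end.

Definition RN (r : nat -> R) (N : nat) : R := sum1 r N.

(* P(T^(N)_1 = n) = r(n)/R_N * 1_{1..N}(n) *)
Definition pT (r : nat -> R) (N n : nat) : R :=
  if andb (1 <=? n)%nat (n <=? N)%nat then r n / RN r N else 0.

Definition cdfT (r : nat -> R) (N n : nat) : R :=
  sum1 (fun m => pT r N m) n.

(* P(tau^(N)_k = n): law of the sum of k i.i.d. copies of T^(N)_1,
   i.e. the k-fold convolution power of the law of T^(N)_1 (tau_0 = 0). *)
Fixpoint ptau (r : nat -> R) (N k n : nat) : R :=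
  match k with
  | O => if (n =? 0)%nat then 1 else 0
  | S k' => sum1 (fun m => if (m <=? n)%nat then pT r N m * ptau r N k' (n - m) else 0) N
  end.

Definition logp (x : R) : R := Rmax (ln x) 0.

(* Main.v *)
Require Import Defs.
From Stdlib Require Import Reals Lra Lia Arith ZArith.
Open Scope R_scope.

Fixpoint sum0 (f : nat -> R) (M : nat) : R :=
  match M with O => 0 | S M' => sum0 f M' + f M' end.

Lemma sum1_ext f g M : (forall m, (1 <= m <= M)%nat -> f m = g m) -> sum1 f M = sum1 g M.
Proof. induction M; intros H; simpl; auto.
  rewrite IHM by (intros; apply H; lia). rewrite H by lia. reflexivity. Qed.
Lemma sum0_ext f g M : (forall m, (m < M)%nat -> f m = g m) -> sum0 f M = sum0 g M.
Proof. induction M; intros H; simpl; auto.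
  rewrite IHM by (intros; apply H; lia). rewrite H by lia. reflexivity. Qed.
Lemma sum1_le f g M : (forall m, (1 <= m <= M)%nat -> f m <= g m) -> sum1 f M <= sum1 g M.
Proof. induction M; intros H; simpl. lra.
  assert (sum1 f M <= sum1 g M) by (apply IHM; intros; apply H; lia).
  assert (f (S M) <= g (S M)) by (apply H; lia). lra. Qed.
Lemma sum0_le f g M : (forall m, (m < M)%nat -> f m <= g m) -> sum0 f M <= sum0 g M.
Proof. induction M; intros H; simpl. lra.
  assert (sum0 f M <= sum0 g M) by (apply IHM; intros; apply H; lia).
  assert (f M <= g M) by (apply H; lia). lra. Qed.
Lemma sum1_nonneg f M : (forall m, (1 <= m <= M)%nat -> 0 <= f m) -> 0 <= sum1 f M.
Proof. intros H. replace 0 with (sum1 (fun _ => 0) M). apply sum1_le; auto.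
  induction M; simpl; auto. rewrite IHM. lra. intros; apply H; lia. Qed.
Lemma sum0_nonneg f M : (forall m, (m < M)%nat -> 0 <= f m) -> 0 <= sum0 f M.
Proof. intros H. replace 0 with (sum0 (fun _ => 0) M). apply sum0_le; auto.
  clear H. induction M; simpl; auto. rewrite IHM. lra. Qed.
Lemma sum1_zero f M : (forall m, (1 <= m <= M)%nat -> f m = 0) -> sum1 f M = 0.
Proof. induction M; intros H; simpl; auto. rewrite IHM by (intros; apply H; lia).
  rewrite H by lia. lra. Qed.
Lemma sum1_plus f g M : sum1 (fun m => f m + g m) M = sum1 f M + sum1 g M.
Proof. induction M; simpl; [lra|]. rewrite IHM. lra. Qed.
Lemma sum0_plus f g M : sum0 (fun m => f m + g m) M = sum0 f M + sum0 g M.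
Proof. induction M; simpl; [lra|]. rewrite IHM. lra. Qed.
Lemma sum1_scal c f M : sum1 (fun m => c * f m) M = c * sum1 f M.
Proof. induction M; simpl; [lra|]. rewrite IHM. lra. Qed.
Lemma sum0_scal c f M : sum0 (fun m => c * f m) M = c * sum0 f M.
Proof. induction M; simpl; [lra|]. rewrite IHM. lra. Qed.
Lemma sum1_swap (g : nat -> nat -> R) M K :
  sum1 (fun i => sum1 (g i) K) M = sum1 (fun m => sum1 (fun i => g i m) M) K.
Proof. induction M; simpl.
  - symmetry; apply sum1_zero; auto.
  - rewrite IHM. rewrite <- sum1_plus. reflexivity. Qed.
Lemma sum0_sum1_swap (g : nat -> nat -> R) M K :
  sum0 (fun m => sum1 (g m) K) M = sum1 (fun i => sum0 (fun m => g m i) M) K.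
Proof. induction M; simpl.
  - symmetry; apply sum1_zero; auto.
  - rewrite IHM. rewrite <- sum1_plus. reflexivity. Qed.
Lemma sum1_trunc f n N : (n <= N)%nat -> (forall m, (n < m <= N)%nat -> f m = 0) ->
  sum1 f N = sum1 f n.
Proof. induction N; intros Hn H.
  - replace n with 0%nat by lia. reflexivity.
  - destruct (Nat.eq_dec n (S N)). subst; reflexivity.
    simpl. rewrite IHN by (try lia; intros; apply H; lia). rewrite H by lia. lra. Qed.
Lemma sum0_shift g n : sum0 (fun x => g (S x)) n + g 0%nat = sum0 g (S n).
Proof. induction n; simpl in *. lra. rewrite <- IHn. lra. Qed.
Lemma sum1_refl n : forall g, sum1 (fun m => g (n - m)%nat) n = sum0 g n.
Proof. induction n; intros g. reflexivity. cbn [sum1].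
  replace (S n - S n)%nat with 0%nat by lia.
  rewrite (sum1_ext _ (fun m => (fun x => g (S x)) (n - m)%nat)).
  rewrite (IHn (fun x => g (S x))). rewrite sum0_shift. reflexivity.
  intros m Hm. cbv beta. f_equal. lia. Qed.
Lemma sum0_S1 (g : nat -> R) i M : (1 <= i)%nat ->
  sum0 (fun m => if (i <=? m)%nat then g (m - i)%nat else 0) (S M) =
  if (i <=? M)%nat then sum0 g (S (M - i)) else 0.
Proof. intros Hi. induction M.
  - simpl. destruct i; [lia|]. simpl. lra.
  - change (sum0 (fun m => if (i <=? m)%nat then g (m - i)%nat else 0) (S M) +
      (if (i <=? S M)%nat then g (S M - i)%nat else 0) =
      (if (i <=? S M)%nat then sum0 g (S (S M - i)) else 0)). rewrite IHM.
    destruct (Nat.leb_spec i M); destruct (Nat.leb_spec i (S M)); try lia.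
    + replace (S M - i)%nat with (S (M - i)) by lia. simpl. reflexivity.
    + replace i with (S M) by lia. rewrite Nat.sub_diag. simpl. lra.
    + lra. Qed.

Section S.
Variable r : nat -> R.
Hypothesis hpos : forall n : nat, (1 <= n)%nat -> 0 < r n.

Lemma RN_pos N : (1 <= N)%nat -> 0 < RN r N.
Proof. unfold RN. induction N; intros H. lia. simpl.
  destruct (Nat.eq_dec N 0). subst. simpl. specialize (hpos 1%nat ltac:(lia)). lra.
  specialize (IHN ltac:(lia)). specialize (hpos (S N) ltac:(lia)). lra. Qed.

Lemma RN_nonneg N : 0 <= RN r N.
Proof. destruct N. unfold RN; simpl; lra. left; apply RN_pos; lia. Qed.

Lemma pT_in N m : (1 <= m <= N)%nat -> pT r N m = r m / RN r N.
Proof. intros H. unfold pT. destruct (Nat.leb_spec 1 m); destruct (Nat.leb_spec m N); simpl; try lia; auto. Qed.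

Lemma pT_out N m : ~ (1 <= m <= N)%nat -> pT r N m = 0.
Proof. intros H. unfold pT. destruct (Nat.leb_spec 1 m); destruct (Nat.leb_spec m N); simpl; try lia; auto. Qed.

Lemma pT_nonneg N m : 0 <= pT r N m.
Proof. destruct (le_dec 1 m); destruct (le_dec m N).
  rewrite pT_in by lia. unfold Rdiv. apply Rmult_le_pos. left; apply hpos; lia.
  left; apply Rinv_0_lt_compat, RN_pos; lia.
  all: rewrite pT_out by lia; lra. Qed.

Lemma ptau_nonneg N k n : 0 <= ptau r N k n.
Proof. revert n; induction k; intros n; simpl.
  destruct (n =? 0)%nat; lra.
  apply sum1_nonneg. intros m _. destruct (m <=? n)%nat; [|lra].
  apply Rmult_le_pos; auto. apply pT_nonneg. Qed.

Lemma ptau_small N k n : (n < k)%nat -> ptau r N k n = 0.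
Proof. revert n; induction k; intros n H. lia. simpl.
  apply sum1_zero. intros m Hm. destruct (Nat.leb_spec m n); [|lra].
  rewrite IHk by lia. lra. Qed.

Lemma ptau_id N k : forall n, INR n * ptau r N (S k) n =
  INR (S k) * sum1 (fun m => if (m <=? n)%nat then INR m * pT r N m * ptau r N k (n - m) else 0) N.
Proof. induction k; intros n.
  - cbn [ptau]. rewrite <- !sum1_scal. apply sum1_ext. intros m Hm.
    destruct (Nat.leb_spec m n); [|lra]. destruct (Nat.eqb_spec (n - m) 0).
    + replace n with m by lia. simpl. lra.
    + lra.
  - set (G := fun i m => if andb (i <=? n)%nat (m <=? n - i)%nat then
          pT r N i * INR m * pT r N m * ptau r N k (n - i - m) else 0).
    set (A := fun m => if (m <=? n)%nat then INR m * pT r N m * ptau r N (S k) (n - m) else 0).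
    assert (HA : sum1 A N = sum1 (fun m => sum1 (fun i => G i m) N) N).
    { apply sum1_ext. intros m Hm. unfold A, G. cbn [ptau].
      destruct (Nat.leb_spec m n).
      - rewrite <- sum1_scal. apply sum1_ext. intros i Hi.
        destruct (Nat.leb_spec i (n - m)); destruct (Nat.leb_spec i n); destruct (Nat.leb_spec m (n - i)); simpl; try lia; try lra.
        replace (n - i - m)%nat with (n - m - i)%nat by lia. lra.
      - symmetry. apply sum1_zero. intros i Hi. destruct (Nat.leb_spec i n); destruct (Nat.leb_spec m (n - i)); simpl; try lia; lra. }
    assert (HL : INR n * ptau r N (S (S k)) n =
       sum1 A N + INR (S k) * sum1 (fun i => sum1 (fun m => G i m) N) N).
    { cbn [ptau]. rewrite <- sum1_scal. rewrite <- (sum1_scal (INR (S k))), <- sum1_plus.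
      apply sum1_ext. intros i Hi. unfold A. cbn [ptau] in IHk.
      destruct (Nat.leb_spec i n).
      - replace (INR n) with (INR i + INR (n - i)) by (rewrite <- plus_INR; f_equal; lia).
        assert (E := IHk (n - i)%nat). cbn [ptau] in E.
        transitivity (INR i * pT r N i * ptau r N (S k) (n - i) + pT r N i * (INR (n - i) * ptau r N (S k) (n - i))).
        { cbn [ptau]. lra. }
        cbn [ptau]. rewrite E. f_equal.
        transitivity (INR (S k) * (pT r N i * sum1 (fun m => if (m <=? n - i)%nat then INR m * pT r N m * ptau r N k (n - i - m) else 0) N)). lra.
        f_equal. rewrite <- sum1_scal. apply sum1_ext. intros m Hm. unfold G.
        destruct (Nat.leb_spec i n); destruct (Nat.leb_spec m (n - i)); simpl; try lia; lra.
      - rewrite <- sum1_scal. rewrite sum1_zero. lra. intros m Hm. unfold G.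
        destruct (Nat.leb_spec i n); simpl; try lia; lra. }
    rewrite HL. change (sum1 A N + INR (S k) * sum1 (fun i : nat => sum1 (fun m : nat => G i m) N) N =
       INR (S (S k)) * sum1 A N).
    rewrite sum1_swap, <- HA. rewrite (S_INR (S k)). lra.
Qed.
End S.

Lemma sum1_mono_n f n M : (forall m, (1 <= m)%nat -> 0 <= f m) -> (n <= M)%nat -> sum1 f n <= sum1 f M.
Proof. intros H. induction M; intros Hn. replace n with 0%nat by lia. lra.
  destruct (Nat.eq_dec n (S M)). subst; lra. simpl.
  specialize (IHM ltac:(lia)). specialize (H (S M) ltac:(lia)). lra. Qed.

Section S.
Variable r : nat -> R.
Hypothesis hpos : forall n : nat, (1 <= n)%nat -> 0 < r n.
Variable N : nat.
Variable z : R.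
Hypothesis hz : 0 <= z.

Definition psi M := sum1 (fun i => pT r N i * z ^ i) M.

Lemma psi_nonneg M : 0 <= psi M.
Proof. apply sum1_nonneg. intros. apply Rmult_le_pos. apply pT_nonneg; auto. apply pow_le; auto. Qed.

Lemma chernoff j : forall M, (M <= N)%nat ->
  sum0 (fun m => ptau r N j m * z ^ m) (S M) <= (psi M) ^ j.
Proof. induction j; intros M HM.
  - right. rewrite pow_O. clear HM. induction M. simpl. lra.
    transitivity (sum0 (fun m => ptau r N 0 m * z ^ m) (S M) + ptau r N 0 (S M) * z ^ (S M)).
    reflexivity. rewrite IHM. simpl. lra.
  - set (g := fun m => ptau r N j m * z ^ m).
    set (G := fun i m => if (i <=? m)%nat then pT r N i * z ^ i * g (m - i)%nat else 0).
    transitivity (sum0 (fun m => sum1 (fun i => G i m) N) (S M)).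
    { right. apply sum0_ext. intros m Hm. cbn [ptau]. rewrite Rmult_comm, <- sum1_scal.
      apply sum1_ext. intros i Hi. unfold G, g. destruct (Nat.leb_spec i m); [|lra].
      assert (E : z ^ m = z ^ i * z ^ (m - i)) by (rewrite <- pow_add; f_equal; lia).
      rewrite E. lra. }
    rewrite sum0_sum1_swap.
    transitivity (sum1 (fun i => if (i <=? M)%nat then pT r N i * z ^ i * psi M ^ j else 0) N).
    { apply sum1_le. intros i Hi.
      transitivity (pT r N i * z ^ i * (if (i <=? M)%nat then sum0 g (S (M - i)) else 0)).
      { right. rewrite <- sum0_S1 by lia. rewrite <- sum0_scal. apply sum0_ext. intros m _.
        unfold G. destruct (i <=? m)%nat; lra. }
      destruct (Nat.leb_spec i M); [|lra].
      apply Rmult_le_compat_l. apply Rmult_le_pos. apply pT_nonneg; auto. apply pow_le; auto.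
      apply Rle_trans with (psi (M - i) ^ j). apply IHj; lia.
      apply pow_incr. split. apply psi_nonneg. unfold psi. apply sum1_mono_n; [|lia].
      intros. apply Rmult_le_pos. apply pT_nonneg; auto. apply pow_le; auto. }
    right. rewrite (sum1_trunc _ M N HM).
    rewrite (sum1_ext _ (fun i => psi M ^ j * (pT r N i * z ^ i))).
    rewrite sum1_scal. simpl. fold (psi M). lra.
    intros i Hi. destruct (Nat.leb_spec i M); [lra|lia].
    intros m Hm. destruct (Nat.leb_spec m M); [lia|lra].
Qed.
End S.

Lemma exp_le_mono x y : x <= y -> exp x <= exp y.
Proof. intros [H|H]. left; apply exp_increasing; auto. subst; lra. Qed.
Lemma ln_le_mono x y : 0 < x -> x <= y -> ln x <= ln y.
Proof. intros Hx [H|H]. left; apply ln_increasing; auto. subst; lra. Qed.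
Lemma ln_nonneg x : 1 <= x -> 0 <= ln x.
Proof. intros H. rewrite <- ln_1. apply ln_le_mono; lra. Qed.
Lemma ln_pos' x : 1 < x -> 0 < ln x.
Proof. intros H. rewrite <- ln_1. apply ln_increasing; lra. Qed.
Lemma exp_pow x n : exp x ^ n = exp (INR n * x).
Proof. induction n. simpl. rewrite Rmult_0_l, exp_0; auto.
  rewrite S_INR. simpl. rewrite IHn, <- exp_plus. f_equal. lra. Qed.
Lemma ln_le_sub1 y : 0 < y -> ln y <= y - 1.
Proof. intros H. rewrite <- (ln_exp (y - 1)). apply ln_le_mono; auto.
  pose proof (exp_ineq1_le (y - 1)). lra. Qed.
Lemma ln_diff_le x y : 0 < x -> 0 < y -> ln y - ln x <= y / x - 1.
Proof. intros Hx Hy. replace y with (x * (y / x)) at 1 by (field; lra).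
  rewrite ln_mult; [| lra | apply Rdiv_lt_0_compat; lra].
  pose proof (ln_le_sub1 (y / x) ltac:(apply Rdiv_lt_0_compat; lra)). lra. Qed.
Lemma one_minus_le_exp u : 1 - u <= exp (- u).
Proof. pose proof (exp_ineq1_le (- u)). lra. Qed.

Lemma INR_pos1 n : (1 <= n)%nat -> 0 < INR n.
Proof. intros; apply lt_0_INR; lia. Qed.

Lemma harm_lower a n : (1 <= a)%nat -> (a <= S n)%nat ->
  ln (INR (S n)) - ln (INR a) <= sum1 (fun i => if (a <=? i)%nat then / INR i else 0) n.
Proof. intros Ha. induction n; intros H.
  - replace a with 1%nat by lia. simpl. lra.
  - destruct (Nat.eq_dec a (S (S n))).
    + subst. replace (ln (INR (S (S n))) - ln (INR (S (S n)))) with 0 by lra.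
      apply sum1_nonneg. intros m _. destruct (Nat.leb_spec (S (S n)) m); [|lra].
      left. apply Rinv_0_lt_compat, INR_pos1; lia.
    + specialize (IHn ltac:(lia)). cbn [sum1]. destruct (Nat.leb_spec a (S n)); [|lia].
      pose proof (ln_diff_le (INR (S n)) (INR (S (S n))) (INR_pos1 (S n) ltac:(lia)) (INR_pos1 (S (S n)) ltac:(lia))).
      replace (INR (S (S n)) / INR (S n) - 1) with (/ INR (S n)) in H1.
      lra.
      rewrite (S_INR (S n)). field. pose proof (INR_pos1 (S n) ltac:(lia)). lra. Qed.

Lemma harm_upper n : (1 <= n)%nat -> sum1 (fun i => / INR i) n <= 1 + ln (INR n).
Proof. induction n; intros H. lia.
  destruct (Nat.eq_dec n 0). subst. simpl. rewrite ln_1. lra.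
  specialize (IHn ltac:(lia)). cbn [sum1].
  pose proof (ln_diff_le (INR (S n)) (INR n) (INR_pos1 (S n) ltac:(lia)) (INR_pos1 n ltac:(lia))).
  replace (INR n / INR (S n) - 1) with (- / INR (S n)) in H0.
  lra. rewrite (S_INR n). field. pose proof (INR_pos1 n ltac:(lia)). lra. Qed.

Lemma key_ineq x : 0 < x -> x * (2 - ln x) <= exp 1.
Proof. intros Hx. set (u := ln x). assert (Ex : x = exp u) by (unfold u; rewrite exp_ln; auto).
  destruct (Rle_dec (2 - u) 0).
  - pose proof (exp_pos 1). nra.
  - rewrite Ex. pose proof (exp_ineq1_le (1 - u)).
    assert (exp u * (2 - u) <= exp u * exp (1 - u)). apply Rmult_le_compat_l. left; apply exp_pos. lra.
    rewrite <- exp_plus in H0. replace (u + (1 - u)) with 1 in H0 by lra. lra. Qed.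

Lemma fin_lower (f : nat -> R) M : (forall m, (1 <= m)%nat -> 0 < f m) ->
  exists B, 0 < B /\ forall m, (1 <= m <= M)%nat -> B <= f m.
Proof. intros Hf. induction M.
  - exists 1. split. lra. intros; lia.
  - destruct IHM as [B [HB H]]. exists (Rmin B (f (S M))). split.
    apply Rmin_pos; auto. apply Hf; lia.
    intros m Hm. destruct (Nat.eq_dec m (S M)). subst. apply Rmin_r.
    apply Rle_trans with B. apply Rmin_l. apply H; lia. Qed.

Lemma fin_upper (f : nat -> R) M :
  exists B, forall m, (1 <= m <= M)%nat -> f m <= B.
Proof. induction M.
  - exists 0. intros; lia.
  - destruct IHM as [B H]. exists (Rmax B (f (S M))).
    intros m Hm. destruct (Nat.eq_dec m (S M)). subst. apply Rmax_r.
    apply Rle_trans with B. apply H; lia. apply Rmax_l. Qed.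

Lemma r_bounds (r : nat -> R) (a : R) (ha : 0 < a)
  (hpos : forall n : nat, (1 <= n)%nat -> 0 < r n)
  (hasym : Un_cv (fun n => INR n * r n) a) :
  exists A1 A2, 0 < A1 /\ A1 <= A2 /\ forall m, (1 <= m)%nat -> A1 <= INR m * r m <= A2.
Proof. destruct (hasym (a / 2) ltac:(lra)) as [N0 HN0].
  destruct (fin_lower (fun n => INR n * r n) N0) as [B1 [HB1 H1]].
  { intros m Hm. apply Rmult_lt_0_compat. apply INR_pos1; auto. apply hpos; auto. }
  destruct (fin_upper (fun n => INR n * r n) N0) as [B2 H2].
  set (A1 := Rmin B1 (a / 2)). set (A2 := Rmax B2 (3 * a / 2)).
  assert (HA : forall m, (1 <= m)%nat -> A1 <= INR m * r m <= A2).
  { intros m Hm. destruct (le_dec m N0).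
    - split. apply Rle_trans with B1. apply Rmin_l. apply H1; lia.
      apply Rle_trans with B2. apply H2; lia. apply Rmax_l.
    - specialize (HN0 m ltac:(lia)). unfold R_dist in HN0. apply Rabs_def2 in HN0.
      split. apply Rle_trans with (a / 2). apply Rmin_r. lra.
      apply Rle_trans with (3 * a / 2). lra. apply Rmax_r. }
  exists A1, A2. split. apply Rmin_pos; lra. split; auto.
  destruct (HA 1%nat ltac:(lia)). lra. Qed.

Lemma floor_ex y : 0 <= y -> exists m : nat, INR m <= y < INR m + 1.
Proof. intros Hy. destruct (base_Int_part y) as [H1 H2].
  assert (Hz : (0 <= Int_part y)%Z). { apply le_IZR. assert (IZR (Int_part y) > -1) by lra.
    apply lt_IZR in H. simpl in H. apply IZR_le. lia. }
  exists (Z.to_nat (Int_part y)). rewrite INR_IZR_INZ, Z2Nat.id by auto. lra. Qed.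

Lemma pow_le1 z n : 0 <= z <= 1 -> z ^ n <= 1.
Proof. intros H. rewrite <- (pow1 n). apply pow_incr; lra. Qed.

Lemma pow_anti z m n : 0 <= z <= 1 -> (m <= n)%nat -> z ^ n <= z ^ m.
Proof. intros H Hmn. replace n with (m + (n - m))%nat by lia. rewrite pow_add.
  pose proof (pow_le1 z (n - m) H). pose proof (pow_le z m ltac:(lra)).
  nra. Qed.

Section S.
Variable r : nat -> R.
Hypothesis hpos : forall n : nat, (1 <= n)%nat -> 0 < r n.
Variables A1 A2 : R.
Hypothesis hA1 : 0 < A1.
Hypothesis hA : forall m, (1 <= m)%nat -> A1 <= INR m * r m <= A2.

Lemma step1 N k n : (1 <= n <= N)%nat ->
  ptau r N (S k) n <= (A2 / A1) * INR (S k) * pT r N n * sum0 (ptau r N k) n.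
Proof. intros Hn. set (Q := sum0 (ptau r N k) n). set (RNN := RN r N).
  assert (HR : 0 < RNN) by (apply RN_pos; auto; lia).
  assert (HQ : 0 <= Q) by (apply sum0_nonneg; intros; apply ptau_nonneg; auto).
  assert (H1 : INR n * ptau r N (S k) n <= INR (S k) * ((A2 / RNN) * Q)).
  { rewrite ptau_id by auto. apply Rmult_le_compat_l. apply pos_INR.
    apply Rle_trans with (sum1 (fun m => if (m <=? n)%nat then A2 / RNN * ptau r N k (n - m) else 0) N).
    { apply sum1_le. intros m Hm. destruct (m <=? n)%nat; [|lra].
      apply Rmult_le_compat_r. apply ptau_nonneg; auto. rewrite pT_in by auto.
      destruct (hA m ltac:(lia)). unfold Rdiv. fold RNN.
      replace (INR m * (r m * / RNN)) with ((INR m * r m) * / RNN) by ring.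
      apply Rmult_le_compat_r. left; apply Rinv_0_lt_compat; auto. lra. }
    right. rewrite (sum1_trunc _ n N) by (try lia; intros m Hm; destruct (Nat.leb_spec m n); lia || lra).
    rewrite (sum1_ext _ (fun m => A2 / RNN * ptau r N k (n - m))).
    rewrite sum1_scal. f_equal. apply sum1_refl.
    intros m Hm. destruct (Nat.leb_spec m n); lia || lra. }
  assert (H2 : A1 <= INR n * pT r N n * RNN).
  { rewrite pT_in by auto. destruct (hA n ltac:(lia)). fold RNN.
    replace (INR n * (r n / RNN) * RNN) with (INR n * r n) by (field; lra). lra. }
  set (X := ptau r N (S k) n) in *. set (P := pT r N n) in *.
  assert (HX : 0 <= X) by (apply ptau_nonneg; auto).
  assert (HP : 0 <= P) by (apply pT_nonneg; auto).
  assert (A1 * X <= A2 * INR (S k) * P * Q).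
  { apply Rle_trans with (INR n * P * RNN * X). apply Rmult_le_compat_r; auto.
    replace (INR n * P * RNN * X) with (P * RNN * (INR n * X)) by ring.
    apply Rle_trans with (P * RNN * (INR (S k) * (A2 / RNN * Q))).
    apply Rmult_le_compat_l; auto. apply Rmult_le_pos; lra.
    right. field. lra. }
  apply Rmult_le_reg_l with A1; auto.
  replace (A1 * (A2 / A1 * INR (S k) * P * Q)) with (A2 * INR (S k) * P * Q) by (field; lra).
  auto. Qed.

Lemma step2 N k n z : (n <= N)%nat -> 0 < z <= 1 ->
  sum0 (ptau r N k) n <= psi r N z n ^ k / z ^ n.
Proof. intros Hn Hz. assert (Hzn : 0 < z ^ n) by (apply pow_lt; lra).
  apply Rle_trans with (sum0 (ptau r N k) (S n)).
  { simpl. pose proof (ptau_nonneg r hpos N k n). lra. }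
  apply Rmult_le_reg_l with (z ^ n); auto.
  replace (z ^ n * (psi r N z n ^ k / z ^ n)) with (psi r N z n ^ k) by (field; lra).
  rewrite <- sum0_scal. apply Rle_trans with (sum0 (fun m => ptau r N k m * z ^ m) (S n)).
  apply sum0_le. intros m Hm. rewrite Rmult_comm. apply Rmult_le_compat_l.
  apply ptau_nonneg; auto. apply pow_anti; lra || lia.
  apply chernoff; auto; lra. Qed.

Lemma cdf_eq N n : (1 <= n <= N)%nat -> cdfT r N n = RN r n / RN r N.
Proof. intros Hn. unfold cdfT, RN. unfold Rdiv. rewrite Rmult_comm, <- sum1_scal.
  apply sum1_ext. intros m Hm. rewrite pT_in by lia. unfold RN, Rdiv. ring. Qed.

Lemma psi_eq N z n : (n <= N)%nat -> psi r N z n = sum1 (fun i => r i * z ^ i) n / RN r N.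
Proof. intros Hn. unfold psi, Rdiv. rewrite Rmult_comm, <- sum1_scal.
  apply sum1_ext. intros m Hm. rewrite pT_in by lia. unfold Rdiv. ring. Qed.

Lemma theta_bound a n : (1 <= a <= n)%nat ->
  sum1 (fun i => r i * exp (- (1 / INR a)) ^ i) n <=
  RN r n - (1 - exp (-1)) * A1 * (ln (INR (S n)) - ln (INR a)).
Proof. intros Ha. set (z := exp (- (1 / INR a))).
  assert (Hai : 0 < INR a) by (apply INR_pos1; lia).
  assert (E : RN r n = sum1 (fun i => r i * z ^ i) n + sum1 (fun i => r i * (1 - z ^ i)) n).
  { unfold RN. rewrite <- sum1_plus. apply sum1_ext. intros; ring. }
  assert (L : (1 - exp (-1)) * A1 * (ln (INR (S n)) - ln (INR a)) <= sum1 (fun i => r i * (1 - z ^ i)) n).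
  { apply Rle_trans with ((1 - exp (-1)) * A1 * sum1 (fun i => if (a <=? i)%nat then / INR i else 0) n).
    apply Rmult_le_compat_l. apply Rmult_le_pos; [|lra].
    assert (exp (-1) < exp 0) by (apply exp_increasing; lra). rewrite exp_0 in H. lra.
    apply harm_lower; lia.
    rewrite <- sum1_scal. apply sum1_le. intros i Hi.
    assert (Hii : 0 < INR i) by (apply INR_pos1; lia).
    assert (Hzi : z ^ i = exp (INR i * - (1 / INR a))) by (unfold z; apply exp_pow).
    pose proof (hpos i ltac:(lia)).
    destruct (Nat.leb_spec a i).
    - assert (INR a <= INR i) by (apply le_INR; auto).
      assert (z ^ i <= exp (-1)). { rewrite Hzi. apply exp_le_mono.
        assert (INR i * (1 / INR a) >= 1). { apply Rle_ge. unfold Rdiv. rewrite Rmult_1_l.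
          apply Rmult_le_reg_r with (INR a); auto. rewrite Rmult_assoc, Rinv_l by lra. lra. }
        lra. }
      destruct (hA i ltac:(lia)).
      assert (A1 * / INR i <= r i). { apply Rmult_le_reg_l with (INR i); auto.
        rewrite <- Rmult_assoc, (Rmult_comm (INR i) A1), Rmult_assoc, Rinv_r by lra. lra. }
      assert (0 <= 1 - exp (-1)). { assert (Hk : exp (-1) < exp 0) by (apply exp_increasing; lra). rewrite exp_0 in Hk. lra. }
      assert (0 <= A1 * / INR i) by (apply Rmult_le_pos; [lra| left; apply Rinv_0_lt_compat; auto]).
      replace ((1 - exp (-1)) * A1 * / INR i) with ((A1 * / INR i) * (1 - exp (-1))) by ring.
      apply Rmult_le_compat; lra.
    - rewrite Rmult_0_r. apply Rmult_le_pos; [lra|].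
      assert (z ^ i <= 1). { rewrite Hzi. apply Rle_trans with (exp 0); [|rewrite exp_0; lra]. apply exp_le_mono.
        assert (0 <= INR i * (1 / INR a)). { apply Rmult_le_pos; [lra|]. unfold Rdiv; rewrite Rmult_1_l; left; apply Rinv_0_lt_compat; auto. }
        replace (INR i * - (1 / INR a)) with (- (INR i * (1 / INR a))) by ring; lra. }
      lra. }
  lra. Qed.
End S.

Theorem mainTheorem4 (r : nat -> R) (a : R)
  (ha : 0 < a)
  (hpos : forall n : nat, (1 <= n)%nat -> 0 < r n)
  (hasym : Un_cv (fun n => INR n * r n) a) :
  exists C c : R, 0 < C /\ 0 < c /\ c < 1 /\
    forall N k n : nat, (1 <= N)%nat -> (1 <= k)%nat -> (1 <= n)%nat -> (n <= N)%nat ->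
      ptau r N k n <=
        C * INR k * pT r N n * (cdfT r N n) ^ (k - 1) *
        exp (- ((c * INR k / (ln (INR n) + 1)) * logp (c * INR k / (ln (INR n) + 1)))).
Proof.
  destruct (r_bounds r a ha hpos hasym) as [A1 [A2 [hA1 [hA12 hA]]]].
  set (kap := 1 - exp (-1)).
  assert (Hkap : 0 < kap < 1).
  { unfold kap. assert (Hk : exp (-1) < exp 0) by (apply exp_increasing; lra).
    rewrite exp_0 in Hk. pose proof (exp_pos (-1)). lra. }
  set (rho := kap * A1 / A2).
  assert (Hrho : 0 < rho <= kap).
  { unfold rho. split. apply Rdiv_lt_0_compat; [apply Rmult_lt_0_compat|]; lra.
    apply Rmult_le_reg_r with A2; [lra|].
    replace (kap * A1 / A2 * A2) with (kap * A1) by (field; lra). nra. }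
  set (c := rho / 4).
  exists ((A2 / A1) * exp (exp 1)), c.
  assert (HC : 0 < A2 / A1 * exp (exp 1)) by (apply Rmult_lt_0_compat; [apply Rdiv_lt_0_compat|apply exp_pos]; lra).
  split; auto. split. unfold c; lra. split. unfold c; lra.
  intros N k n HN Hk Hn HnN.
  set (L := ln (INR n) + 1).
  assert (HnR : 1 <= INR n) by (rewrite <- INR_1; apply le_INR; auto).
  assert (HL : 1 <= L) by (unfold L; pose proof (ln_nonneg _ HnR); lra).
  set (x := c * INR k / L).
  assert (HkR : 1 <= INR k) by (rewrite <- INR_1; apply le_INR; auto).
  assert (Hx : 0 < x) by (unfold x; apply Rdiv_lt_0_compat; [apply Rmult_lt_0_compat|]; unfold c; lra).
  set (P := pT r N n). set (F := cdfT r N n).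
  assert (HP : 0 <= P) by (apply pT_nonneg; auto).
  assert (HF : 0 <= F) by (apply sum1_nonneg; intros; apply pT_nonneg; auto).
  destruct (le_lt_dec k n) as [Hkn | Hkn].
  2: { rewrite ptau_small by auto. apply Rmult_le_pos; [|left; apply exp_pos].
       apply Rmult_le_pos; [|apply pow_le; auto]. apply Rmult_le_pos; auto.
       apply Rmult_le_pos; lra. }
  destruct k as [|j]; [lia|]. replace (S j - 1)%nat with j by lia.
  set (Q := sum0 (ptau r N j) n).
  assert (H1 : ptau r N (S j) n <= (A2 / A1) * INR (S j) * P * Q) by (apply step1; auto; lia).
  set (E := exp (- (x * logp x))).
  assert (HE : 0 < E) by apply exp_pos.
  assert (HQ : Q <= exp (exp 1) * F ^ j * E).
  { destruct (Rle_dec x 1) as [Hx1 | Hx1].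
    - assert (Hlp : logp x = 0). { unfold logp. apply Rmax_right.
        rewrite <- ln_1. apply ln_le_mono; lra. }
      unfold E. rewrite Hlp, Rmult_0_r, Ropp_0, exp_0, Rmult_1_r.
      apply Rle_trans with (F ^ j).
      + apply Rle_trans with (psi r N 1 n ^ j / 1 ^ n). apply step2; auto; lra.
        rewrite pow1. unfold Rdiv. rewrite Rinv_1, Rmult_1_r. right. f_equal.
        unfold psi, F, cdfT. apply sum1_ext. intros. rewrite pow1; ring.
      + assert (1 <= exp (exp 1)). { apply Rle_trans with (exp 0); [rewrite exp_0; lra|]. apply exp_le_mono. pose proof (exp_pos 1); lra. }
        pose proof (pow_le F j HF). nra.
    - apply Rnot_le_lt in Hx1.
      assert (Hlx : 0 < ln x) by (apply ln_pos'; auto).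
      assert (Hlp : logp x = ln x) by (unfold logp; apply Rmax_left; lra).
      assert (Hj : (1 <= j)%nat).
      { destruct j; [|lia]. exfalso. unfold x in Hx1. simpl in Hx1.
        assert (c * 1 / L <= c) by (apply Rmult_le_reg_r with L; [lra|]; unfold Rdiv; rewrite Rmult_assoc, Rinv_l by lra; unfold c; nra).
        unfold c in *. lra. }
      assert (HjR : INR (S j) <= 2 * INR j) by (rewrite S_INR; assert (1 <= INR j) by (rewrite <- INR_1; apply le_INR; auto); lra).
      assert (HxN : x <= INR n).
      { apply Rle_trans with (INR (S j)); [|apply le_INR; auto].
        unfold x. apply Rmult_le_reg_r with L; [lra|]. unfold Rdiv. rewrite Rmult_assoc, Rinv_l by lra.
        unfold c. nra. }
      destruct (floor_ex (INR n / x)) as [aa [Ha1 Ha2]].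
      { unfold Rdiv. apply Rmult_le_pos; [lra|]. left; apply Rinv_0_lt_compat; lra. }
      assert (Hyx : 1 <= INR n / x). { apply Rmult_le_reg_r with x; auto. unfold Rdiv. rewrite Rmult_assoc, Rinv_l by lra. lra. }
      assert (Haa1 : (1 <= aa)%nat). { destruct aa; [|lia]. simpl in Ha2. lra. }
      assert (HaR : 0 < INR aa) by (apply INR_pos1; auto).
      assert (Haan : (aa <= n)%nat). { apply INR_le. apply Rle_trans with (INR n / x); auto.
        apply Rmult_le_reg_r with x; auto. unfold Rdiv. rewrite Rmult_assoc, Rinv_l by lra. nra. }
      set (t := INR n / INR aa).
      assert (Ht1 : x <= t). { unfold t. apply Rmult_le_reg_r with (INR aa); auto. unfold Rdiv. rewrite Rmult_assoc, Rinv_l by lra.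
        rewrite Rmult_1_r. assert (INR aa * x <= INR n / x * x) by (apply Rmult_le_compat_r; lra).
        unfold Rdiv in H. rewrite Rmult_assoc, Rinv_l, Rmult_1_r in H by lra. lra. }
      assert (Ht2 : t <= 2 * x). { unfold t. apply Rmult_le_reg_r with (INR aa); auto. unfold Rdiv. rewrite Rmult_assoc, Rinv_l by lra.
        rewrite Rmult_1_r. assert (INR n / x * x < (INR aa + 1) * x) by (apply Rmult_lt_compat_r; lra).
        unfold Rdiv in H. rewrite Rmult_assoc, Rinv_l, Rmult_1_r in H by lra.
        assert (1 <= INR aa) by (rewrite <- INR_1; apply le_INR; auto). nra. }
      assert (Hlt : ln x <= ln t) by (apply ln_le_mono; lra).
      set (z := exp (- (1 / INR aa))).
      assert (Hz : 0 < z <= 1). { unfold z. split. apply exp_pos. apply Rle_trans with (exp 0); [|rewrite exp_0; lra].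
        apply exp_le_mono. assert (0 < 1 / INR aa) by (apply Rdiv_lt_0_compat; lra). lra. }
      assert (Hzn : z ^ n = exp (- t)). { unfold z. rewrite exp_pow. f_equal. unfold t. field. lra. }
      assert (H2 := step2 r hpos N j n z HnN Hz). fold Q in H2. rewrite Hzn in H2.
      set (ps := psi r N z n) in *.
      assert (Hps0 : 0 <= ps) by (apply psi_nonneg; auto; lra).
      assert (HRn : 0 < RN r n) by (apply RN_pos; auto).
      assert (HRN : 0 < RN r N) by (apply RN_pos; auto).
      assert (HRnL : RN r n <= A2 * L).
      { apply Rle_trans with (A2 * sum1 (fun i => / INR i) n).
        unfold RN. rewrite <- sum1_scal. apply sum1_le. intros i Hi.
        destruct (hA i ltac:(lia)). assert (0 < INR i) by (apply INR_pos1; lia).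
        apply Rmult_le_reg_l with (INR i); auto. rewrite <- Rmult_assoc, (Rmult_comm (INR i) A2), Rmult_assoc, Rinv_r by lra. lra.
        apply Rmult_le_compat_l; [lra|]. unfold L. pose proof (harm_upper n Hn). lra. }
      assert (Hlnt : ln t <= ln (INR (S n)) - ln (INR aa)).
      { unfold t, Rdiv. rewrite ln_mult, ln_Rinv; auto; [| lra | apply Rinv_0_lt_compat; auto].
        assert (ln (INR n) <= ln (INR (S n))) by (apply ln_le_mono; [lra|apply le_INR; lia]). lra. }
      assert (Hth := theta_bound r hpos A1 A2 hA1 hA aa n ltac:(lia)). fold z in Hth.
      assert (Hlt0 : 0 <= ln t) by lra.
      assert (Hps : ps <= F * exp (- (rho * ln t / L))).
      { unfold ps. rewrite psi_eq by auto. unfold F. rewrite cdf_eq by auto.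
        unfold Rdiv at 1 2. rewrite (Rmult_comm (RN r n)), Rmult_assoc, (Rmult_comm (/ RN r N)).
        apply Rmult_le_compat_r. left; apply Rinv_0_lt_compat; auto.
        apply Rle_trans with (RN r n - kap * A1 * ln t).
        { fold kap in Hth. assert (0 <= kap * A1) by (apply Rmult_le_pos; lra).
          assert (kap * A1 * ln t <= kap * A1 * (ln (INR (S n)) - ln (INR aa))) by (apply Rmult_le_compat_l; lra). lra. }
        apply Rle_trans with (RN r n * (1 - rho * ln t / L)).
        { assert (rho * ln t / L * RN r n <= kap * A1 * ln t).
          { unfold rho. apply Rle_trans with (kap * A1 / A2 * ln t / L * (A2 * L)).
            apply Rmult_le_compat_l; auto. apply Rmult_le_pos; [apply Rmult_le_pos|left; apply Rinv_0_lt_compat]; try lra.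
            left; apply Rdiv_lt_0_compat; [apply Rmult_lt_0_compat|]; lra.
            right. field. lra. }
          lra. }
        apply Rmult_le_compat_l; [lra|]. apply one_minus_le_exp. }
      assert (Hpsj : ps ^ j <= F ^ j * exp (INR j * - (rho * ln t / L))).
      { rewrite <- exp_pow, <- Rpow_mult_distr. apply pow_incr. split; auto. }
      assert (Hexp : INR j * - (rho * ln t / L) + t <= exp 1 - x * ln x).
      { assert (Hw : 2 * x <= INR j * rho / L).
        { unfold x, c. apply Rmult_le_reg_r with L; [lra|]. unfold Rdiv. rewrite !Rmult_assoc, Rinv_l by lra. nra. }
        assert (2 * x * ln x <= INR j * rho / L * ln t).
        { apply Rle_trans with (2 * x * ln t). apply Rmult_le_compat_l; lra. apply Rmult_le_compat_r; lra. }
        assert (INR j * - (rho * ln t / L) = - (INR j * rho / L * ln t)) by (field; lra).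
        pose proof (key_ineq x Hx). nra. }
      apply Rle_trans with (ps ^ j / exp (- t)); auto.
      rewrite exp_Ropp. unfold Rdiv. rewrite Rinv_inv.
      apply Rle_trans with (F ^ j * exp (INR j * - (rho * ln t / L)) * exp t).
      apply Rmult_le_compat_r; [left; apply exp_pos|auto].
      rewrite Rmult_assoc, <- exp_plus.
      unfold E. rewrite Hlp. 
      apply Rle_trans with (F ^ j * exp (exp 1 - x * ln x)).
      apply Rmult_le_compat_l. apply pow_le; auto. apply exp_le_mono; auto.
      right. replace (exp 1 - x * ln x) with (exp 1 + - (x * ln x)) by ring. rewrite exp_plus. ring. }
  apply Rle_trans with (A2 / A1 * INR (S j) * P * Q); auto.
  replace (A2 / A1 * exp (exp 1) * INR (S j) * P * F ^ j * E) with (A2 / A1 * INR (S j) * P * (exp (exp 1) * F ^ j * E)) by ring.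
  apply Rmult_le_compat_l; auto.
  apply Rmult_le_pos; auto. apply Rmult_le_pos; [|apply pos_INR]. left; apply Rdiv_lt_0_compat; lra.
Qed.
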